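(* Let $R$ be an uncountable principal ideal domain. Then every ring extension $T$ of $R$ has a maximal subring.
   Context: All rings are commutative with $1\neq0$ and subrings and ring extensions are unital. A maximal subring is a proper subring maximal with respect to inclusion among proper subrings. *)

(* Defs.v *)
From HB Require Import structures.
From mathcomp Require Import all_boot all_order all_algebra.
Set Implicit Arguments. Unset Strict Implicit. Unset Printing Implicit Defensive.
Import GRing.Theory.
Local Open Scope ring_scope.

Definition is_ideal (R : comNzRingType) (I : R -> Prop) : Prop :=
  [/\ I 0,
      (forall x y, I x -> I y -> I (x + y)) &
      (forall r x, I x -> I (r * x))].

Definition principal_ideal (R : comNzRingType) (I : R -> Prop) : Prop :=
  exists a : R, forall x, I x <-> exists c : R, x = c * a.

Definition is_PID (R : idomainType) : Prop :=
  forall I : R -> Prop, is_ideal I -> principal_ideal I.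

Definition uncountable (T : Type) : Prop :=
  ~ exists f : T -> nat, injective f.

Definition is_subring (T : comNzRingType) (S : T -> Prop) : Prop :=
  [/\ S 1,
      (forall x y, S x -> S y -> S (x - y)) &
      (forall x y, S x -> S y -> S (x * y))].

Definition proper_pred (T : Type) (S : T -> Prop) : Prop := exists x, ~ S x.

Definition maximal_subring (T : comNzRingType) (S : T -> Prop) : Prop :=
  [/\ is_subring S, proper_pred S &
      forall S' : T -> Prop, is_subring S' -> proper_pred S' ->
        (forall x, S x -> S' x) -> forall x, S' x -> S x].

(* Main.v *)
Require Import Defs.
From HB Require Import structures.
From mathcomp Require Import all_boot all_order all_algebra.
From mathcomp Require Import boolp classical_sets.
From mathcomp Require Import ring.
Set Implicit Arguments. Unset Strict Implicit. Unset Printing Implicit Defensive.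
Import GRing.Theory.
Local Open Scope ring_scope.

Local Open Scope classical_set_scope.
Lemma zorn_pred (X : Type) (P : (X -> Prop) -> Prop) (A0 : X -> Prop) :
  P A0 ->
  (forall F : (X -> Prop) -> Prop, (forall B, F B -> P B) ->
     (forall B C, F B -> F C -> (forall x, B x -> C x) \/ (forall x, C x -> B x)) ->
     (exists B, F B) -> P (fun x => exists B, F B /\ B x)) ->
  exists A, P A /\ forall B, P B -> (forall x, A x -> B x) -> forall x, B x -> A x.
Proof.
move=> PA0 HF.
have hyp : forall F : set (set X), F `<=` (fun B => P B \/ B = set0) ->
    total_on F subset -> (fun B => P B \/ B = set0) (\bigcup_(Y in F) Y).
  move=> F FP Ftot.
  case: (pselect (exists B, F B /\ B <> set0)) => [[B0 [FB0 nB0]]|nB].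
    left.
    have -> : \bigcup_(Y in F) Y = (fun x => exists B, (F B /\ P B) /\ B x).
      apply/seteqP; split=> x /=.
        case=> Y FY Yx; exists Y; split=> //; split=> //.
        by case: (FP Y FY) => // Ye; move: Yx; rewrite Ye.
      by case=> Y [[FY _] Yx]; exists Y.
    apply: HF.
    - by move=> B [].
    - move=> B C [FB _] [FC _]; case: (Ftot B C FB FC) => h; [left|right]; exact: h.
    - exists B0; split=> //; by case: (FP B0 FB0).
  right; apply/seteqP; split=> x //=; case=> Y FY Yx.
  case: (FP Y FY) => [PY|Ye]; last by move: Yx; rewrite Ye.
  by exfalso; apply: nB; exists Y; split=> // Ye; move: Yx; rewrite Ye.
have [A [PA Amax]] := Zorn_bigcup hyp.
exists A.
have key : forall B, P B -> (forall x, A x -> B x) -> forall x, B x -> A x.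
  move=> B PB AB x Bx; apply: contrapT => nAx.
  by apply: (Amax B) => //; [split=> //; move=> /(_ x Bx) | left].
split=> //; case: PA => // A0e.
have sub : forall x, A0 x -> A x by apply: key => // x; rewrite A0e.
suff -> : A = A0 by [].
by apply/seteqP; split=> x //; [rewrite A0e | apply: sub].
Qed.

Local Close Scope classical_set_scope.
Section IdealFacts.
Variables (T : comNzRingType) (Q : T -> Prop).
Hypothesis hQ : is_ideal Q.
Lemma iq0 : Q 0. Proof. by case: hQ. Qed.
Lemma iqD x y : Q x -> Q y -> Q (x + y). Proof. by case: hQ => _ h _; apply: h. Qed.
Lemma iqM r x : Q x -> Q (r * x). Proof. by case: hQ => _ _ h; apply: h. Qed.
Lemma iqMr r x : Q x -> Q (x * r). Proof. by rewrite mulrC; apply: iqM. Qed.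
Lemma iqN x : Q x -> Q (- x). Proof. by move=> h; rewrite -mulN1r; apply: iqM. Qed.
Lemma iqB x y : Q x -> Q y -> Q (x - y). Proof. by move=> ? ?; apply: iqD => //; apply: iqN. Qed.
Lemma iq_sum (I : Type) (r : seq I) (Pr : pred I) (F : I -> T) :
  (forall i, Pr i -> Q (F i)) -> Q (\sum_(i <- r | Pr i) F i).
Proof. by move=> h; apply: (big_ind Q iq0 iqD). Qed.
Lemma iq_horner (p : {poly T}) x : (forall i, Q p`_i) -> Q p.[x].
Proof. by move=> h; rewrite horner_coef; apply: iq_sum => i _; apply: iqMr. Qed.
End IdealFacts.

Section SubringFacts.
Variables (T : comNzRingType) (A : T -> Prop).
Hypothesis hA : is_subring A.
Lemma sr1 : A 1. Proof. by case: hA. Qed.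
Lemma srB x y : A x -> A y -> A (x - y). Proof. by case: hA => _ h _; apply: h. Qed.
Lemma srM x y : A x -> A y -> A (x * y). Proof. by case: hA => _ _ h; apply: h. Qed.
Lemma sr0 : A 0. Proof. by rewrite -(subrr 1); apply: srB; apply: sr1. Qed.
Lemma srN x : A x -> A (- x). Proof. by move=> h; rewrite -sub0r; apply: srB => //; apply: sr0. Qed.
Lemma srD x y : A x -> A y -> A (x + y).
Proof. by move=> hx hy; rewrite -[y]opprK; apply: srB => //; apply: srN. Qed.
Lemma sr_sum (I : Type) (r : seq I) (Pr : pred I) (F : I -> T) :
  (forall i, Pr i -> A (F i)) -> A (\sum_(i <- r | Pr i) F i).
Proof. by move=> h; apply: (big_ind A sr0 srD). Qed.
Lemma srX x n : A x -> A (x ^+ n).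
Proof. by move=> h; elim: n => [|n IH]; rewrite ?expr0 ?exprS; [apply: sr1 | apply: srM]. Qed.
Lemma sr_horner (p : {poly T}) x : (forall i, A p`_i) -> A x -> A p.[x].
Proof. by move=> h hx; rewrite horner_coef; apply: sr_sum => i _; apply: srM => //; apply: srX. Qed.
Lemma sr_coefM (p q : {poly T}) : (forall i, A p`_i) -> (forall i, A q`_i) -> forall i, A (p * q)`_i.
Proof. by move=> hp hq i; rewrite coefM; apply: sr_sum => j _; apply: srM. Qed.
End SubringFacts.

Lemma LA (T : comNzRingType) (S : T -> Prop) (t : T) :
  is_subring S -> ~ S t ->
  (forall S', is_subring S' -> (forall x, S x -> S' x) -> S' t -> forall x, S' x) ->
  exists M : T -> Prop, maximal_subring M.
Proof.
move=> hS nSt gen.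
pose P := fun A : T -> Prop => [/\ is_subring A, (forall x, S x -> A x) & ~ A t].
have chn : forall F : (T -> Prop) -> Prop, (forall B, F B -> P B) ->
     (forall B C, F B -> F C -> (forall x, B x -> C x) \/ (forall x, C x -> B x)) ->
     (exists B, F B) -> P (fun x => exists B, F B /\ B x).
  move=> F FP Ftot [B0 FB0].
  split.
  - split.
    + by exists B0; split=> //; case: (FP B0 FB0) => h _ _; apply: sr1.
    + move=> x y [B [FB Bx]] [C [FC Cy]].
      case: (Ftot B C FB FC) => h.
      * by exists C; split=> //; case: (FP C FC) => hC _ _; apply: srB => //; apply: h.
      * by exists B; split=> //; case: (FP B FB) => hB _ _; apply: srB => //; apply: h.
    + move=> x y [B [FB Bx]] [C [FC Cy]].
      case: (Ftot B C FB FC) => h.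
      * by exists C; split=> //; case: (FP C FC) => hC _ _; apply: srM => //; apply: h.
      * by exists B; split=> //; case: (FP B FB) => hB _ _; apply: srM => //; apply: h.
  - by move=> x Sx; exists B0; split=> //; case: (FP B0 FB0) => _ h _; apply: h.
  - by case=> B [FB Bt]; case: (FP B FB).
have [M [[hM SM nMt] Mmax]] := @zorn_pred T P S (And3 hS (fun x h => h) nSt) chn.
exists M; split=> //; first by exists t.
move=> S' hS' [y nS'y] MS' x S'x.
case: (pselect (S' t)) => S't; first by exfalso; apply: nS'y; apply: gen => // z /SM /MS'.
by apply: (Mmax S') => //; split=> // z /SM /MS'.
Qed.


Lemma exmax (P : nat -> Prop) N : (exists j, (j < N)%N /\ P j) ->
  exists n, [/\ (n < N)%N, P n & forall j, (n < j < N)%N -> ~ P j].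
Proof.
elim: N => [|N IH]; first by case=> j [].
case: (pselect (P N)) => PN.
  by move=> _; exists N; split=> // j /andP[a b]; move: (leq_ltn_trans a b); rewrite ltnn.
case=> j [jN Pj]; have jN' : (j < N)%N.
  by move: jN; rewrite ltnS leq_eqVlt => /orP[/eqP e|//]; move: Pj; rewrite e.
have [n [nN Pn nP]] := IH (ex_intro _ j (conj jN' Pj)).
exists n; split=> //; first by apply: ltnW.
move=> i /andP[ni]; rewrite ltnS leq_eqVlt => /orP[/eqP ->//|iN].
by apply: nP; rewrite ni.
Qed.

Lemma exmin (P : nat -> Prop) : (exists k, P k) ->
  exists k, P k /\ forall j, (j < k)%N -> ~ P j.
Proof.
case=> k; elim/ltn_ind: k => k IH Pk.
case: (pselect (exists j, (j < k)%N /\ P j)) => [[j [jk Pj]]|h].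
  by apply: (IH j).
by exists k; split=> // j jk Pj; apply: h; exists j.
Qed.

Section EngineSub.
Variables (T : comNzRingType) (Q A : T -> Prop) (u v : T).
Hypothesis hQ : is_ideal Q.
Hypothesis hQ1 : ~ Q 1.
Hypothesis hQp : forall a b, Q (a * b) -> Q a \/ Q b.
Hypothesis huv : Q (u * v - 1).
Hypothesis hA : is_subring A.
Hypothesis hQA : forall x, Q x -> A x.
Hypothesis htr : forall p : {poly T}, (forall i, A p`_i) -> Q p.[u] -> forall i, Q p`_i.
Hypothesis hmax : forall y, ~ A y -> exists p : {poly T},
  [/\ (forall i, exists r : {poly T}, (forall j, A r`_j) /\ p`_i = r.[y]),
      Q p.[u] & exists i, ~ Q p`_i].

Definition Ab : {pred T} := fun x => `[< A x >].
Lemma AbE x : (x \in Ab) = `[< A x >]. Proof. by []. Qed.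
Lemma Ab_closed : subring_closed Ab.
Proof.
split; rewrite ?AbE.
- by apply/asboolP; apply: sr1.
- by move=> x y; rewrite !AbE => /asboolP ? /asboolP ?; apply/asboolP; apply: srB.
- by move=> x y; rewrite !AbE => /asboolP ? /asboolP ?; apply/asboolP; apply: srM.
Qed.
HB.instance Definition _ := GRing.isSubringClosed.Build T Ab Ab_closed.
Definition sA := {x : T | x \in Ab}.
HB.instance Definition _ := [isSub of sA for @sval T (fun x => x \in Ab)].
HB.instance Definition _ := [Choice of sA by <:].
HB.instance Definition _ := [SubChoice_isSubComNzRing of sA by <:].

Lemma val1 : val (1 : sA) = 1. Proof. exact: rmorph1. Qed.
Lemma valM (a b : sA) : val (a * b) = val a * val b. Proof. exact: rmorphM. Qed.
Lemma valX (a : sA) n : val (a ^+ n) = val a ^+ n. Proof. exact: rmorphXn. Qed.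
Lemma valA (a : sA) : A (val a).
Proof. by have := valP a; rewrite AbE => /asboolP. Qed.

Definition ev (p : {poly sA}) : T := (map_poly val p).[u].
HB.instance Definition _ := GRing.RMorphism.copy ev (horner_eval u \o map_poly val).
Lemma ev0 : ev 0 = 0. Proof. exact: raddf0. Qed.
Lemma ev1 : ev 1 = 1. Proof. exact: rmorph1. Qed.
Lemma evD p q : ev (p + q) = ev p + ev q. Proof. exact: rmorphD. Qed.
Lemma evB p q : ev (p - q) = ev p - ev q. Proof. exact: rmorphB. Qed.
Lemma evM p q : ev (p * q) = ev p * ev q. Proof. exact: rmorphM. Qed.
Lemma evXn p n : ev (p ^+ n) = ev p ^+ n. Proof. exact: rmorphXn. Qed.
Lemma ev_sum (I : Type) (r : seq I) (P : pred I) (F : I -> {poly sA}) :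
  ev (\sum_(i <- r | P i) F i) = \sum_(i <- r | P i) ev (F i).
Proof. exact: rmorph_sum. Qed.
Lemma evE p : ev p = (map_poly val p).[u]. Proof. by []. Qed.
Lemma evC (c : sA) : ev c%:P = val c. Proof. by rewrite evE map_polyC hornerC. Qed.
Lemma evX : ev 'X = u. Proof. by rewrite evE map_polyX hornerX. Qed.

Definition liftp (r : {poly T}) : {poly sA} := \poly_(i < size r) insubd 0 r`_i.
Lemma liftpK (r : {poly T}) : (forall j, A r`_j) -> map_poly val (liftp r) = r.
Proof.
move=> h; apply/polyP => i; rewrite coef_map coef_poly.
case: ifP => ir; first by apply: insubdK; rewrite AbE; apply/asboolP.
by rewrite raddf0 nth_default // leqNgt ir.
Qed.

Lemma htrS W : Q (ev W) -> forall i, Q (val W`_i).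
Proof.
move=> h i; rewrite -coef_map; apply: htr => // j; rewrite coef_map; exact: valA.
Qed.

Lemma size_mapv (p : {poly sA}) : size (map_poly val p) = size p.
Proof. by apply: size_map_inj_poly; [apply: val_inj | rewrite raddf0]. Qed.

Lemma ev_poly n (E : nat -> sA) : ev (\poly_(i < n) E i) = \sum_(i < n) val (E i) * u ^+ i.
Proof.
rewrite evE (@horner_coef_wide _ n); last first.
  by rewrite size_mapv size_poly.
by apply: eq_bigr => i _; rewrite coef_map coef_poly ltn_ord.
Qed.

Definition Int (w : T) := integralOver ev w.

Lemma Int_A a : A a -> Int a.
Proof.
move=> h; have -> : a = ev (insubd 0 a)%:P by rewrite evC insubdK // AbE; apply/asboolP.
exact: integral_id.
Qed.

Lemma iqX a n : Q (a ^+ n) -> Q a.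
Proof.
elim: n => [|n IH]; first by rewrite expr0.
by rewrite exprS => /hQp [//|]; apply: IH.
Qed.

Lemma IntQ_Int (p : {poly {poly sA}}) w : p \is monic -> Q (map_poly ev p).[w] -> Int w.
Proof.
move=> mp hq; set q := (map_poly ev p).[w] in hq.
have Aq : A q by apply: hQA.
pose c : {poly sA} := (insubd 0 q)%:P.
have evc : ev c = q by rewrite evC insubdK // AbE; apply/asboolP.
have sp : (1 < size p)%N.
  rewrite ltnNge; apply/negP => sp1.
  have lc : lead_coef p = 1 := monicP mp.
  have sp1' : size p = 1%N.
    apply/eqP; rewrite eqn_leq sp1 /= lt0n size_poly_eq0; apply/eqP => p0.
    by move: lc; rewrite p0 lead_coef0 => /eqP; rewrite eq_sym oner_eq0.
  have p1 : p = 1.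
    rewrite [p]size1_polyC ?sp1' // -polyC1; congr (_%:P).
    by rewrite -lc /lead_coef sp1'.
  by move: hq; rewrite /q p1 rmorph1 hornerC.
exists (p - c%:P).
  rewrite monicE lead_coefDl ?(monicP mp) //.
  by rewrite size_polyN size_polyC; case: (c != 0) => //; apply: ltnW.
have e : map_poly ev (p - c%:P) = map_poly ev p - (ev c)%:P.
  apply/polyP => i; rewrite coef_map !coefB coef_map !coefC raddfB.
  by case: (i == 0%N) => //; congr (_ - _); exact: raddf0.
by rewrite /root e hornerD hornerN hornerC evc subrr.
Qed.

Definition Sset (w : T) := exists G : {poly sA}, ~ Q (val G`_0) /\ Int (ev G * w).

Lemma S_sub : is_subring Sset.
Proof.
split.
- exists 1; split; first by rewrite coefC /=.
  by rewrite rmorph1 mulr1; apply: integral1.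
- move=> x y [G1 [n1 I1]] [G2 [n2 I2]]; exists (G1 * G2); split.
    by rewrite coef0M valM => /hQp [].
  have -> : ev (G1 * G2) * (x - y) = ev G2 * (ev G1 * x) - ev G1 * (ev G2 * y).
    by rewrite rmorphM; ring.
  by apply: integral_sub; apply: integral_mul => //; apply: integral_id.
- move=> x y [G1 [n1 I1]] [G2 [n2 I2]]; exists (G1 * G2); split.
    by rewrite coef0M valM => /hQp [].
  have -> : ev (G1 * G2) * (x * y) = (ev G1 * x) * (ev G2 * y).
    by rewrite rmorphM; ring.
  exact: integral_mul.
Qed.

Lemma S_Q q : Q q -> Sset q.
Proof.
move=> h; exists 1; split; first by rewrite coefC /=.
by rewrite rmorph1 mul1r; apply: Int_A; apply: hQA.
Qed.

Lemma powQ k : Q ((u * v) ^+ k - 1).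
Proof.
elim: k => [|k IH]; first by rewrite expr0 subrr; apply: (iq0 hQ).
have -> : (u * v) ^+ k.+1 - 1 = (u * v) ^+ k * (u * v - 1) + ((u * v) ^+ k - 1).
  by rewrite exprS; ring.
by apply: (iqD hQ) => //; apply: (iqM hQ).
Qed.


Lemma size_map_le (R1 R2 : nzSemiRingType) (f : R1 -> R2) (p : {poly R1}) :
  (size (map_poly f p) <= size p)%N.
Proof. exact: size_poly. Qed.

Lemma S_notv : ~ Sset v.
Proof.
case=> G [nQ0 IG].
pose a := G`_0.
pose D := drop_poly 1 G.
have tk : take_poly 1 G = a%:P.
  by apply/polyP => i; rewrite coef_take_poly coefC; case: i.
have eG : ev G = val a + ev D * u.
  by rewrite -[in LHS](poly_take_drop 1 G) tk evD evM evC expr1 evX.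
have IaV : Int (val a * v).
  have -> : val a * v = ev G * v - (ev D + ev D * (u * v - 1)) by rewrite eG; ring.
  apply: integral_sub => //; apply: integral_add; first exact: integral_id.
  by apply: Int_A; apply: hQA; apply: (iqM hQ).
case: IaV => p mp rt.
have sp : (0 < size p)%N by rewrite lt0n size_poly_eq0 monic_neq0.
pose n := (size p).-1.
have spn : size p = n.+1 by rewrite /n prednK.
pose W : {poly sA} := \sum_(j < n.+1) p`_j * (a ^+ j)%:P * 'X^(n - j).
have rt' : \sum_(j < n.+1) ev p`_j * (val a * v) ^+ j = 0.
  move/eqP: rt; rewrite (@horner_coef_wide _ n.+1); last first.
    by rewrite -spn; apply: size_map_le.
  by move=> e; rewrite -[X in _ = X]e; apply: eq_bigr => j _; rewrite coef_map.
have evW : ev W = \sum_(j < n.+1) ev p`_j * val a ^+ j * u ^+ (n - j).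
  rewrite ev_sum; apply: eq_bigr => j _.
  by rewrite !evM evC valX evXn evX.
have QW : Q (ev W).
  have -> : ev W = ev W - u ^+ n * \sum_(j < n.+1) ev p`_j * (val a * v) ^+ j.
    by rewrite rt' mulr0 subr0.
  rewrite evW mulr_sumr -sumrB; apply: (iq_sum hQ) => j _.
  have hj : u ^+ n = u ^+ (n - j) * u ^+ j by rewrite -exprD subnK // -ltnS.
  have -> : ev p`_j * val a ^+ j * u ^+ (n - j) - u ^+ n * (ev p`_j * (val a * v) ^+ j)
      = - (ev p`_j * val a ^+ j * u ^+ (n - j)) * ((u * v) ^+ j - 1).
    rewrite hj !exprMn.
    by move: (u ^+ (n - j)) (u ^+ j) (v ^+ j) (val a ^+ j) (ev p`_j) => E U V X P; ring.
  by apply: (iqM hQ); apply: powQ.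
have W0 : W`_0 = a ^+ n.
  rewrite /W coef_sum big_ord_recr /= subnn expr0 mulr1 big1 ?add0r.
    rewrite coefMC.
    have -> : p`_n = 1 by rewrite -(monicP mp) /lead_coef spn.
    by rewrite coefC /= mul1r.
  move=> j _; rewrite coefMXn subn_gt0 ltn_ord; done.
by have := htrS QW 0; rewrite W0 valX => /iqX.
Qed.

Lemma S_gen w : exists k, Sset (u ^+ k * w).
Proof.
case: (pselect (A w)) => Aw.
  exists 0%N; exists 1; split; first by rewrite coefC /=.
  by rewrite ev1 expr0 !mul1r; apply: Int_A.
have [p [hp Qpu [i0 nQi0]]] := hmax Aw.
have [Rf hRf] := choice hp.
pose R i := liftp (Rf i).
have RK i : map_poly val (R i) = Rf i by apply: liftpK; case: (hRf i).
have pR i : p`_i = (map_poly val (R i)).[w] by rewrite RK; case: (hRf i).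
pose N := \max_(i < size p) size (R i).
have sRN i : (i < size p)%N -> (size (R i) <= N)%N.
  by move=> ip; exact: (@leq_bigmax _ (fun i : 'I_(size p) => size (R i)) (Ordinal ip)).
pose C j : {poly sA} := \poly_(i < size p) (R i)`_j.
pose c j := ev (C j).
have cE j : c j = \sum_(i < size p) val (R i)`_j * u ^+ i by rewrite /c ev_poly.
have claim1 : \sum_(j < N) c j * w ^+ j = p.[u].
  transitivity (\sum_(i < size p) \sum_(j < N) val (R i)`_j * u ^+ i * w ^+ j).
    rewrite exchange_big /=; apply: eq_bigr => j _; rewrite cE mulr_suml.
    by apply: eq_bigr.
  rewrite horner_coef; apply: eq_bigr => i _.
  rewrite pR (@horner_coef_wide _ N) ?size_mapv ?sRN // mulr_suml.
  by apply: eq_bigr => j _; rewrite coef_map /= mulrAC.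
have claim2 : exists j, (j < N)%N /\ ~ Q (c j).
  have i0p : (i0 < size p)%N.
    by rewrite ltnNge; apply/negP => h; apply: nQi0; rewrite nth_default //; apply: (iq0 hQ).
  have : ~ Q p`_i0 := nQi0.
  rewrite pR (@horner_coef_wide _ N) ?size_mapv ?sRN // => nQ.
  have [j [jN nQj]] : exists j, (j < N)%N /\ ~ Q (val (R i0)`_j).
    apply: contrapT => hh; apply: nQ; apply: (iq_sum hQ) => j _; apply: (iqMr hQ).
    rewrite coef_map /=; apply: contrapT => nq; apply: hh; exists j; split => //.
  exists j; split=> // Qcj.
  by have := htrS Qcj i0; rewrite coef_poly i0p.
have [n [nN nQn above]] := exmax claim2.
have Qlow : Q (\sum_(j < n.+1) c j * w ^+ j).
  have e : \sum_(j < N) c j * w ^+ j =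
      \sum_(j < n.+1) c j * w ^+ j + \sum_(n.+1 <= j < N) c j * w ^+ j.
    by rewrite -!(big_mkord xpredT (fun j => c j * w ^+ j)) -big_cat_nat.
  have h : Q (\sum_(j < N) c j * w ^+ j) by rewrite claim1.
  rewrite e in h.
  have h2 : Q (\sum_(n.+1 <= j < N) c j * w ^+ j).
    rewrite big_nat; apply: (iq_sum hQ) => j /andP [j1 j2]; apply: (iqMr hQ).
    by apply: contrapT => hj; apply: (above j) => //; rewrite j1 j2.
  by have := iqB hQ h h2; rewrite addrK.
case: n nN nQn above Qlow => [|m] nN nQn above Qlow.
  by exfalso; apply: nQn; move: Qlow; rewrite big_ord1 expr0 mulr1.
pose mon : {poly {poly sA}} := 'X^(m.+1) + \poly_(j < m.+1) (C j * C m.+1 ^+ (m - j)).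
have smon : (size mon <= m.+2)%N.
  rewrite (leq_trans (size_polyD _ _)) // geq_max size_polyXn leqnn /=.
  by rewrite (leq_trans (size_poly _ _)).
have mmon : mon \is monic.
  rewrite monicE lead_coefDl ?lead_coefXn // size_polyXn ltnS; exact: size_poly.
have cmon j : (j < m.+1)%N -> mon`_j = C j * C m.+1 ^+ (m - j).
  by move=> jm; rewrite coefD coefXn coef_poly jm (ltn_eqF jm) add0r.
have cmonn : mon`_(m.+1) = 1.
  by rewrite coefD coefXn coef_poly ltnn eqxx addr0.
have Icw : Int (c m.+1 * w).
  apply: (IntQ_Int mmon).
  have -> : (map_poly ev mon).[c m.+1 * w] = c m.+1 ^+ m * \sum_(j < m.+2) c j * w ^+ j.
    rewrite (@horner_coef_wide _ m.+2); last by rewrite (leq_trans (size_map_le _ _)).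
    rewrite big_ord_recr /= [in RHS]big_ord_recr /= mulrDr.
    congr (_ + _).
      rewrite mulr_sumr; apply: eq_bigr => j _.
      rewrite coef_map /= cmon // evM evXn -/(c j) -/(c m.+1) exprMn.
      have hj : c m.+1 ^+ m = c m.+1 ^+ (m - j) * c m.+1 ^+ j by rewrite -exprD subnK // -ltnS.
      rewrite hj.
      by move: (c m.+1 ^+ (m - j)) (c m.+1 ^+ j) (c j) (w ^+ j) => E1 E2 E3 E4; ring.
    rewrite coef_map /= cmonn ev1 mul1r exprMn exprS.
    by rewrite mulrA [c m.+1 ^+ m * _]mulrC.
  by apply: (iqM hQ).
have exk : exists k, ~ Q (val (C m.+1)`_k).
  apply: contrapT => hh; apply: nQn; rewrite /c evE; apply: (iq_horner hQ) => i.
  by rewrite coef_map /=; apply: contrapT => q; apply: hh; exists i.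
have [k [nQk belowk]] := exmin exk.
pose G := drop_poly k (C m.+1).
exists k, G; split; first by rewrite coef_drop_poly add0n.
have ecn : c m.+1 = ev (take_poly k (C m.+1)) + ev G * u ^+ k.
  by rewrite /c -{1}(poly_take_drop k (C m.+1)) evD evM evXn evX.
have Qt : Q (ev (take_poly k (C m.+1))).
  rewrite evE; apply: (iq_horner hQ) => i; rewrite coef_map coef_take_poly.
  case: ifP => ik; first by apply: contrapT => h; exact: belowk i ik h.
  by rewrite raddf0; apply: (iq0 hQ).
have -> : ev G * (u ^+ k * w) = c m.+1 * w - ev (take_poly k (C m.+1)) * w.
  by rewrite ecn; ring.
by apply: integral_sub => //; apply: Int_A; apply: hQA; apply: (iqMr hQ).
Qed.

Lemma engine_sec : exists M : T -> Prop, maximal_subring M.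
Proof.
apply: (LA S_sub S_notv) => S' hS' SS' S'v w.
have [k Sk] := S_gen w.
have -> : w = v ^+ k * (u ^+ k * w) - ((u * v) ^+ k - 1) * w.
  by rewrite exprMn; move: (u ^+ k) (v ^+ k) => U V; ring.
apply: srB => //; first by apply: srM => //; [apply: srX | apply: SS'].
by apply: SS'; apply: S_Q; apply: (iqMr hQ); apply: powQ.
Qed.

End EngineSub.


Lemma chain_union_subring (T : comNzRingType) (F : (T -> Prop) -> Prop) :
  (forall B, F B -> is_subring B) ->
  (forall B C, F B -> F C -> (forall x, B x -> C x) \/ (forall x, C x -> B x)) ->
  (exists B, F B) -> is_subring (fun x => exists B, F B /\ B x).
Proof.
move=> FP Ftot [B0 FB0]; split.
- by exists B0; split=> //; apply: sr1; apply: FP.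
- move=> x y [B [FB Bx]] [C [FC Cy]].
  case: (Ftot B C FB FC) => h.
  + by exists C; split=> //; apply: srB => //; [apply: FP | apply: h].
  + by exists B; split=> //; apply: srB => //; [apply: FP | apply: h].
- move=> x y [B [FB Bx]] [C [FC Cy]].
  case: (Ftot B C FB FC) => h.
  + by exists C; split=> //; apply: srM => //; [apply: FP | apply: h].
  + by exists B; split=> //; apply: srM => //; [apply: FP | apply: h].
Qed.

Lemma chain_finite (T : Type) (F : (T -> Prop) -> Prop) (a : nat -> T) :
  (forall B C, F B -> F C -> (forall x, B x -> C x) \/ (forall x, C x -> B x)) ->
  (exists B, F B) -> (forall i, exists B, F B /\ B (a i)) ->
  forall n, exists B, F B /\ forall i, (i < n)%N -> B (a i).
Proof.
move=> Ftot [B0 FB0] ha; elim=> [|n [B [FB hB]]]; first by exists B0.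
have [C [FC Cn]] := ha n.
case: (Ftot B C FB FC) => h.
- by exists C; split=> // i; rewrite ltnS leq_eqVlt => /orP[/eqP ->//|/hB/h].
- by exists B; split=> // i; rewrite ltnS leq_eqVlt => /orP[/eqP ->|/hB//]; apply: h.
Qed.

Lemma engine (T : comNzRingType) (Q : T -> Prop) (u v : T) :
  is_ideal Q -> ~ Q 1 -> (forall a b, Q (a * b) -> Q a \/ Q b) -> Q (u * v - 1) ->
  (forall g : {poly int}, Q (map_poly intr g).[u] -> forall i, Q (g`_i)%:~R) ->
  exists M : T -> Prop, maximal_subring M.
Proof.
move=> hQ hQ1 hQp huv htr0.
pose trans (A : T -> Prop) := forall p : {poly T}, (forall i, A p`_i) -> Q p.[u] -> forall i, Q p`_i.
pose P A := [/\ is_subring A, (forall x, Q x -> A x) & trans A].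
pose A0 x := exists n : int, Q (x - n%:~R).
have PA0 : P A0.
  split.
  - split.
    + by exists 1; rewrite subrr; apply: (iq0 hQ).
    + move=> x y [n hn] [m hm]; exists (n - m).
      have -> : x - y - (n - m)%:~R = (x - n%:~R) - (y - m%:~R) by rewrite intrB; move: (n%:~R : T) (m%:~R : T) => N M; ring.
      exact: (iqB hQ).
    + move=> x y [n hn] [m hm]; exists (n * m).
      have -> : x * y - (n * m)%:~R = (x - n%:~R) * y + n%:~R * (y - m%:~R) by rewrite intrM; move: (n%:~R : T) (m%:~R : T) => N M; ring.
      by apply: (iqD hQ); [apply: (iqMr hQ) | apply: (iqM hQ)].
  - by move=> x hx; exists 0; rewrite subr0.
  - move=> p hp hpu.
    have [nf hnf] := choice hp.
    pose g : {poly int} := \poly_(i < size p) nf i.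
    have hg : forall i, Q (p`_i - (map_poly intr g)`_i).
      move=> i; rewrite coef_map coef_poly; case: ifP => ip; first exact: hnf.
      have -> : p`_i = 0 by apply: nth_default; rewrite leqNgt ip.
      by rewrite raddf0 subrr; apply: (iq0 hQ).
    have Qg : Q (map_poly intr g).[u].
      have e : (map_poly intr g).[u] = p.[u] - (p - map_poly intr g).[u].
        by rewrite hornerD hornerN opprB addrC subrK.
      rewrite e; apply: (iqB hQ) => //; apply: (iq_horner hQ) => i.
      by rewrite coefB; apply: hg.
    move=> i; have := htr0 g Qg i; have := hg i.
    rewrite coef_map => h1 h2.
    by have := iqD hQ h1 h2; rewrite subrK.
have chn : forall F : (T -> Prop) -> Prop, (forall B, F B -> P B) ->
     (forall B C, F B -> F C -> (forall x, B x -> C x) \/ (forall x, C x -> B x)) ->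
     (exists B, F B) -> P (fun x => exists B, F B /\ B x).
  move=> F FP Ftot Fne; split.
  - by apply: chain_union_subring => // B /FP [].
  - by case: Fne => B0 FB0 x hx; exists B0; split=> //; case: (FP B0 FB0) => _ h _; apply: h.
  - move=> p hp hq i.
    have [B [FB hB]] := chain_finite Ftot Fne hp (size p).
    case: (FP B FB) => hBs _ hBt; apply: hBt hq i => j.
    case: (ltnP j (size p)) => jp; first exact: hB.
    by rewrite nth_default //; apply: sr0.
have [A [[hA hQA htrA] Amax]] := zorn_pred PA0 chn.
apply: (engine_sec hQ hQ1 hQp huv hA hQA htrA) => y nAy.
pose Ay z := exists r : {poly T}, (forall j, A r`_j) /\ z = r.[y].
have constA c : A c -> Ay c.
  move=> hc; exists c%:P; split; last by rewrite hornerC.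
  by move=> j; rewrite coefC; case: (j == 0%N) => //; apply: sr0.
have hAy : is_subring Ay.
  split.
  - by apply: constA; apply: sr1.
  - move=> a b [r1 [h1 ->]] [r2 [h2 ->]]; exists (r1 - r2); split; last by rewrite hornerD hornerN.
    by move=> j; rewrite coefB; apply: srB.
  - move=> a b [r1 [h1 ->]] [r2 [h2 ->]]; exists (r1 * r2); split; last by rewrite hornerM.
    exact: sr_coefM.
have ntr : ~ trans Ay.
  move=> tr.
  have PAy : P Ay by split=> // x hx; apply: constA; apply: hQA.
  apply: nAy; apply: (Amax Ay PAy) => [x hx|]; first exact: constA.
  exists 'X; split; last by rewrite hornerX.
  by move=> j; rewrite coefX; case: (j == 1%N); [apply: sr1 | apply: sr0].
apply: contrapT => H; apply: ntr => p hp hq i.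
apply: contrapT => hi; apply: H; exists p; split=> //; last by exists i.
Qed.


Section Alg.
Variable R : idomainType.

Definition trans0 (x : R) := forall g : {poly int},
  (map_poly (intr : int -> R) g).[x] = 0 -> forall i, (g`_i)%:~R = 0 :> R.

Lemma roots_list (p : {poly R}) : p != 0 -> exists s : seq R, forall x, root p x -> x \in s.
Proof.
have [n] := ubnP (size p); elim: n p => // n IH p sp p0.
case: (pselect (exists a, root p a)) => [[a ra]|nr]; last first.
  by exists [::] => x rx; exfalso; apply: nr; exists x.
have [q eq] := factor_theorem p a ra.
have q0 : q != 0 by apply: contraNneq p0 => q0; rewrite eq q0 mul0r.
have sq : (size q < n)%N.
  rewrite -ltnS (leq_trans _ sp) // eq size_Mmonic ?monicXsubC // size_XsubC addn2 /=.
  by rewrite ltnS.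
have [s hs] := IH q sq q0.
exists (a :: s) => x; rewrite inE eq /root hornerM hornerXsubC mulf_eq0 subr_eq0.
by case/orP => [/hs ->|->]; rewrite ?orbT ?eqxx.
Qed.

Definition sroots (p : {poly R}) : seq R :=
  if pselect (exists s : seq R, forall x, root p x -> x \in s) is left h
  then sval (cid h) else [::].

Lemma srootsP p x : p != 0 -> root p x -> x \in sroots p.
Proof.
move=> p0 rx; rewrite /sroots; case: pselect => [h|h]; last first.
  by exfalso; apply: h; apply: roots_list.
by case: (cid h) => s /= hs; apply: hs.
Qed.

Definition algw (x : R) := exists g : {poly int}, map_poly (intr : int -> R) g != 0 /\ root (map_poly (intr : int -> R) g) x.

Lemma not_trans_alg x : ~ trans0 x -> algw x.
Proof.
move=> nt; apply: contrapT => na; apply: nt => g gx i.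
apply: contrapT => gi; apply: na; exists g; split; last by apply/eqP.
by apply/eqP => /polyP /(_ i); rewrite coef_map coef0.
Qed.

Definition gof (x : R) : {poly int} :=
  if pselect (algw x) is left h then sval (cid h) else 0.

Lemma gofP x : algw x -> map_poly (intr : int -> R) (gof x) != 0 /\ root (map_poly (intr : int -> R) (gof x)) x.
Proof.
by move=> h; rewrite /gof; case: pselect => [h'|//]; case: (cid h').
Qed.

Definition acode (x : R) : nat :=
  pickle (gof x, index x (sroots (map_poly (intr : int -> R) (gof x)))).

Lemma acode_inj x y : algw x -> algw y -> acode x = acode y -> x = y.
Proof.
move=> ax ay /(pcan_inj pickleK) [eg ei].
have [nx rx] := gofP ax; have [ny ry] := gofP ay.
have xs := srootsP nx rx; have ys := srootsP ny ry.
rewrite -eg in ys ei.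
by rewrite -(nth_index x xs) ei (nth_index x ys).
Qed.

Lemma exists_trans : uncountable R -> exists x : R, trans0 x.
Proof.
move=> hR; apply: contrapT => nx; apply: hR; exists acode => x y.
apply: acode_inj; apply: not_trans_alg => tx; apply: nx; [exists x | exists y]; done.
Qed.

End Alg.


Section PID.
Variable R : idomainType.
Hypothesis hPID : is_PID R.

Definition dvdR (a b : R) := exists c, b = c * a.
Definition isU (a : R) := exists w, a * w = 1.
Definition primeR (q : R) := [/\ q != 0, ~ isU q & forall a b, dvdR q (a * b) -> dvdR q a \/ dvdR q b].

Lemma dvdR_refl a : dvdR a a. Proof. by exists 1; rewrite mul1r. Qed.
Lemma dvdR_trans a b c : dvdR a b -> dvdR b c -> dvdR a c.
Proof. by move=> [x ->] [y ->]; exists (y * x); rewrite mulrA. Qed.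
Lemma dvdR_mulr a b c : dvdR a b -> dvdR a (c * b).
Proof. by move=> [x ->]; exists (c * x); rewrite mulrA. Qed.
Lemma dvd0 a : dvdR a 0. Proof. by exists 0; rewrite mul0r. Qed.
Lemma dvdD a b c : dvdR a b -> dvdR a c -> dvdR a (b + c).
Proof. by move=> [x ->] [y ->]; exists (x + y); rewrite mulrDl. Qed.

Lemma bezout a b : exists d, [/\ dvdR d a, dvdR d b & exists s t, d = s * a + t * b].
Proof.
pose I z := exists s t, z = s * a + t * b.
have hI : is_ideal I.
  split.
  - by exists 0, 0; rewrite !mul0r addr0.
  - by move=> x y [s [t ->]] [s' [t' ->]]; exists (s + s'), (t + t'); ring.
  - by move=> r x [s [t ->]]; exists (r * s), (r * t); ring.
have [d hd] := hPID hI.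
exists d; split.
- by apply/hd; exists 1, 0; ring.
- by apply/hd; exists 0, 1; ring.
- by apply/hd; exists 1; rewrite mul1r.
Qed.

Lemma isU_mul a b : isU (a * b) -> isU a.
Proof. by move=> [w h]; exists (b * w); rewrite mulrA. Qed.

Lemma cancel_l (q a b : R) : q != 0 -> q * a = q * b -> a = b.
Proof. by move=> q0 /eqP; rewrite -subr_eq0 -mulrBr mulf_eq0 (negbTE q0) subr_eq0 => /eqP. Qed.

Lemma prime_irr q : primeR q -> forall b c, q = b * c -> isU b \/ isU c.
Proof.
move=> [q0 nu pq] b c e.
have : dvdR q (b * c) by rewrite -e; apply: dvdR_refl.
case/pq => [[k hk]|[k hk]].
- by right; exists k; apply: (@cancel_l q) => //; rewrite mulr1 [RHS]e hk; ring.
- by left; exists k; apply: (@cancel_l q) => //; rewrite mulr1 [RHS]e hk; ring.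
Qed.

Lemma irr_prime q : q != 0 -> ~ isU q -> (forall b c, q = b * c -> isU b \/ isU c) -> primeR q.
Proof.
move=> q0 nu irr; split=> // a b hab.
case: (pselect (dvdR q a)) => qa; first by left.
right; have [d [[e he] [f hf] [s [t hst]]]] := bezout q a.
case: (irr e d he) => [[w hw]|[w hw]].
- exfalso; apply: qa.
  have hd : d = w * q by rewrite he mulrA (mulrC w e) hw mul1r.
  by exists (f * w); rewrite hf hd; ring.
- have [k hk] := hab.
  exists (w * (s * b + t * k)).
  have e1 : b = d * w * b by rewrite hw mul1r.
  rewrite {1}e1 hst.
  have -> : (s * q + t * a) * w * b = w * (s * b) * q + w * t * (a * b) by ring.
  by rewrite hk; ring.
Qed.

Definition ltd (b a : R) := [/\ a != 0, dvdR b a & ~ dvdR a b].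

Lemma acc_div a : Acc ltd a.
Proof.
apply: contrapT => na.
have step : forall a, ~ Acc ltd a -> exists b, ltd b a /\ ~ Acc ltd b.
  move=> c nc; apply: contrapT => h; apply: nc; constructor => b lb.
  by apply: contrapT => nb; apply: h; exists b.
pose f c := if pselect (exists b, ltd b c /\ ~ Acc ltd b) is left h then sval (cid h) else c.
have fP c : ~ Acc ltd c -> ltd (f c) c /\ ~ Acc ltd (f c).
  move=> nc; rewrite /f; case: pselect => [h|h]; last by exfalso; apply: h; apply: step.
  by case: (cid h).
pose s n := iter n f a.
have sP n : ~ Acc ltd (s n) by elim: n => [//|n IH]; rewrite /s iterS; case: (fP _ IH).
have sL n : ltd (s n.+1) (s n) by rewrite /s iterS; case: (fP _ (sP n)).
have sD n m : (n <= m)%N -> dvdR (s m) (s n).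
  move=> nm; rewrite -(subnK nm); elim: (m - n)%N => [|k IH]; first by apply: dvdR_refl.
  by apply: dvdR_trans IH; rewrite addSn; case: (sL (k + n)%N).
pose I z := exists n, dvdR (s n) z.
have hI : is_ideal I.
  split.
  - by exists 0%N; apply: dvd0.
  - move=> x y [n hn] [m hm]; exists (maxn n m); apply: dvdD.
    + by apply: dvdR_trans hn; apply: sD; apply: leq_maxl.
    + by apply: dvdR_trans hm; apply: sD; apply: leq_maxr.
  - by move=> r x [n hn]; exists n; apply: dvdR_mulr.
have [c hc] := hPID hI.
have [N hN] : I c by apply/hc; exists 1; rewrite mul1r.
have : I (s N.+1) by exists N.+1; apply: dvdR_refl.
move/hc => [e he].
case: (sL N) => _ _; apply; apply: dvdR_trans hN _.
by exists e.
Qed.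

Lemma prime_div_exists a : a != 0 -> ~ isU a -> exists q, primeR q /\ dvdR q a.
Proof.
elim: (acc_div a) => {}a _ IH a0 nu.
case: (pselect (forall b c, a = b * c -> isU b \/ isU c)) => irr.
  by exists a; split; [apply: irr_prime | apply: dvdR_refl].
have [b [c [e [nb nc]]]] : exists b c, a = b * c /\ ~ isU b /\ ~ isU c.
  apply: contrapT => h; apply: irr => b c e; apply: contrapT => h2; apply: h.
  by exists b, c; split=> //; split=> hu; apply: h2; [left|right].
have b0 : b != 0 by apply: contraNneq a0 => b0; rewrite e b0 mul0r.
have lb : ltd b a.
  split=> //; first by exists c; rewrite e mulrC.
  move=> [k hk]; apply: nc; exists k; apply: (@cancel_l b) => //.
  by rewrite mulr1 [RHS]hk e; ring.
have [q [pq qb]] := IH b lb b0 nb.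
by exists q; split=> //; apply: dvdR_trans qb _; exists c; rewrite e mulrC.
Qed.

Lemma factor a : a != 0 -> exists l : seq R, (forall q, q \in l -> primeR q) /\
  exists w, isU w /\ a = w * \prod_(q <- l) q.
Proof.
elim: (acc_div a) => {}a _ IH a0.
case: (pselect (isU a)) => ua.
  by exists [::]; split=> //; exists a; split=> //; rewrite big_nil mulr1.
have [q [pq [c hc]]] := prime_div_exists a0 ua.
have c0 : c != 0 by apply: contraNneq a0 => c0; rewrite hc c0 mul0r.
have lc : ltd c a.
  split=> //; first by exists q; rewrite hc mulrC.
  move=> [k hk]; case: pq => q0 nu _; apply: nu; exists k; apply: (@cancel_l c) => //.
  by rewrite mulr1 [RHS]hk hc; ring.
have [l [pl [w [uw ew]]]] := IH c lc c0.
exists (q :: l); split.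
  by move=> z; rewrite inE => /orP[/eqP ->//|/pl].
by exists w; split=> //; rewrite big_cons hc ew; ring.
Qed.

Lemma prime_coprime_div q d e : primeR q -> ~ dvdR q d -> dvdR d (q * e) -> dvdR d e.
Proof.
move=> pq nqd [k hk].
have [g [[x hx] [y hy] [s [t hst]]]] := bezout d q.
case: (prime_irr pq hy) => [[z hz]|[z hz]].
- exfalso; apply: nqd; exists (x * z).
  have hg : g = z * q by rewrite hy mulrA (mulrC z y) hz mul1r.
  by rewrite hx hg; ring.
- exists (s * z * e + t * z * k).
  have e1 : e = g * z * e by rewrite hz mul1r.
  rewrite {1}e1 hst.
  have -> : (s * d + t * q) * z * e = s * z * e * d + t * z * (q * e) by ring.
  by rewrite hk; ring.
Qed.

Lemma divisor_mask (l : seq R) w d : (forall q, q \in l -> primeR q) -> isU w ->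
  dvdR d (w * \prod_(q <- l) q) ->
  exists m : bitseq, exists w', isU w' /\ d = w' * \prod_(q <- mask m l) q.
Proof.
elim: l w d => [|q l IH] w d pl uw hd.
  exists [::]; exists d; split; last by rewrite big_nil mulr1.
  case: hd => k; rewrite big_nil mulr1 => hk; case: uw => w' hw.
  by exists (k * w'); rewrite -hw hk; ring.
have pq : primeR q by apply: pl; rewrite inE eqxx.
have pl' : forall z, z \in l -> primeR z by move=> z zl; apply: pl; rewrite inE zl orbT.
case: (pselect (dvdR q d)) => [[d' hd']|nqd].
- have hd2 : dvdR d' (w * \prod_(z <- l) z).
    case: hd => k; rewrite big_cons hd' => hk.
    exists k; apply: (@cancel_l q); first by case: pq.
    by rewrite [LHS]mulrCA hk; ring.
  have [m [w' [uw' e]]] := IH w d' pl' uw hd2.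
  exists (true :: m), w'; split=> //.
  by rewrite hd' e /= big_cons; ring.
- have hd2 : dvdR d (w * \prod_(z <- l) z).
    apply: (prime_coprime_div pq nqd).
    by case: hd => k; rewrite big_cons => hk; exists k; rewrite -hk; ring.
  have [m [w' [uw' e]]] := IH w d pl' uw hd2.
  by exists (false :: m), w'.
Qed.

End PID.


Lemma ideal_zorn (X : comNzRingType) (I M : X -> Prop) :
  is_ideal I -> (forall x, I x -> ~ M x) ->
  exists J, [/\ is_ideal J, (forall x, I x -> J x), (forall x, J x -> ~ M x) &
    forall J', is_ideal J' -> (forall x, J x -> J' x) -> (forall x, J' x -> ~ M x) ->
      forall x, J' x -> J x].
Proof.
move=> hI dI.
pose P J := [/\ is_ideal J, (forall x, I x -> J x) & (forall x, J x -> ~ M x)].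
have chn : forall F : (X -> Prop) -> Prop, (forall B, F B -> P B) ->
     (forall B C, F B -> F C -> (forall x, B x -> C x) \/ (forall x, C x -> B x)) ->
     (exists B, F B) -> P (fun x => exists B, F B /\ B x).
  move=> F FP Ftot [B0 FB0]; split.
  - split.
    + by exists B0; split=> //; case: (FP B0 FB0) => h _ _; apply: iq0.
    + move=> x y [B [FB Bx]] [C [FC Cy]].
      case: (Ftot B C FB FC) => h.
      * by exists C; split=> //; case: (FP C FC) => hC _ _; apply: (iqD hC) => //; apply: h.
      * by exists B; split=> //; case: (FP B FB) => hB _ _; apply: (iqD hB) => //; apply: h.
    + move=> r x [B [FB Bx]]; exists B; split=> //.
      by case: (FP B FB) => hB _ _; apply: (iqM hB).
  - by move=> x Ix; exists B0; split=> //; case: (FP B0 FB0) => _ h _; apply: h.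
  - by move=> x [B [FB Bx]]; case: (FP B FB) => _ _ h; apply: h.
have [J [[hJ IJ dJ] Jmax]] := zorn_pred (And3 hI (fun x h => h) dI) chn.
exists J; split=> // J' hJ' JJ' dJ'; apply: Jmax => //; split=> // x /IJ; exact: JJ'.
Qed.

Lemma max_prime (X : comNzRingType) (M J : X -> Prop) :
  M 1 -> (forall a b, M a -> M b -> M (a * b)) ->
  is_ideal J -> (forall x, J x -> ~ M x) ->
  (forall J', is_ideal J' -> (forall x, J x -> J' x) -> (forall x, J' x -> ~ M x) ->
      forall x, J' x -> J x) ->
  ~ J 1 /\ forall a b, J (a * b) -> J a \/ J b.
Proof.
move=> M1 MM hJ dJ Jmax; split; first by move/dJ.
have ext a : ~ J a -> exists z j s, [/\ J j, z = j + s * a & M z].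
  move=> nJa; apply: contrapT => h; apply: nJa.
  pose Ja z := exists j s, J j /\ z = j + s * a.
  have hJa : is_ideal Ja.
    split.
    - by exists 0, 0; split; [apply: iq0 | rewrite mul0r addr0].
    - move=> x y [j [s [Jj ->]]] [j' [s' [Jj' ->]]]; exists (j + j'), (s + s').
      by split; [apply: iqD | ring].
    - move=> r x [j [s [Jj ->]]]; exists (r * j), (r * s).
      by split; [apply: iqM | ring].
  apply: (Jmax Ja hJa).
  - by move=> x Jx; exists x, 0; rewrite mul0r addr0.
  - by move=> x [j [s [Jj e]]] Mx; apply: h; exists x, j, s.
  - by exists 0, 1; rewrite mul1r add0r; split=> //; apply: iq0.
move=> a b Jab; apply: contrapT => nab.
have nJa : ~ J a by move=> h; apply: nab; left.
have nJb : ~ J b by move=> h; apply: nab; right.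
have [z1 [j1 [s1 [J1 e1 M1']]]] := ext a nJa.
have [z2 [j2 [s2 [J2 e2 M2']]]] := ext b nJb.
apply: (dJ (z1 * z2)); last by apply: MM.
have -> : z1 * z2 = j1 * z2 + (s1 * a) * j2 + (s1 * s2) * (a * b) by rewrite e1 e2; ring.
apply: iqD => //; first apply: iqD => //; by [apply: iqMr | apply: iqM | apply: iqM].
Qed.

Lemma map_int_horner (R T : comNzRingType) (f : {rmorphism R -> T}) (g : {poly int}) (a : R) :
  (map_poly (intr : int -> T) g).[f a] = f ((map_poly (intr : int -> R) g).[a]).
Proof.
rewrite -horner_map; congr (_.[_]); apply/polyP => i.
by rewrite !coef_map /= rmorph_int.
Qed.

Lemma caseA (R : idomainType) (T : comNzRingType) (f : {rmorphism R -> T}) (r : R) (w : T) :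
  injective f -> trans0 r -> f r * w = 1 -> exists M : T -> Prop, maximal_subring M.
Proof.
move=> hf tr hw.
pose Ms z := exists a : R, a != 0 /\ z = f a.
have hI : is_ideal (fun z : T => z = 0).
  split=> //; [by move=> x y -> ->; rewrite addr0 | by move=> r' x ->; rewrite mulr0].
have dI : forall x : T, x = 0 -> ~ Ms x.
  by move=> x -> [a [a0 e]]; move: a0; rewrite -(rmorph0 f) in e; rewrite (hf _ _ e) eqxx.
have [Q [hQ _ dQ Qmax]] := ideal_zorn hI dI.
have M1 : Ms 1 by exists 1; rewrite oner_neq0 rmorph1.
have MM : forall a b, Ms a -> Ms b -> Ms (a * b).
  by move=> _ _ [a [a0 ->]] [b [b0 ->]]; exists (a * b); rewrite mulf_neq0 // rmorphM.
have [nQ1 pQ] := max_prime M1 MM hQ dQ Qmax.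
apply: (@engine T Q (f r) w hQ nQ1 pQ); first by rewrite hw subrr; apply: iq0.
move=> g; rewrite map_int_horner => hg i.
have e0 : (map_poly (intr : int -> R) g).[r] = 0.
  by apply: contrapT => /eqP ne; apply: (dQ _ hg); exists ((map_poly intr g).[r]).
have := tr g e0 i => /(congr1 f); rewrite rmorph_int rmorph0 => ->; exact: (iq0 hQ).
Qed.

Lemma trans_of_nodiv (R : idomainType) (q : R) : q != 0 ->
  (forall n : int, n%:~R != 0 :> R -> ~ dvdR q n%:~R) -> trans0 q.
Proof.
move=> q0 h g gq i; apply: contrapT => ni.
have [k [nk bk]] := @exmin (fun k => (g`_k)%:~R <> 0 :> R) (ex_intro _ i ni).
pose p := map_poly (intr : int -> R) g.
have tk : take_poly k p = 0.
  apply/polyP => j; rewrite coef_take_poly coef0 coef_map /=; case: ifP => // jk.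
  by apply: contrapT; apply: bk; rewrite jk.
pose hh := drop_poly k p.
have ep : p = hh * 'X^k by rewrite -[LHS](poly_take_drop k p) tk add0r.
have h0 : hh.[q] = 0.
  move: gq; rewrite -/p ep hornerM hornerXn => /eqP; rewrite mulf_eq0 expf_eq0 (negbTE q0) andbF orbF.
  by move/eqP.
have tk1 : take_poly 1 hh = (hh`_0)%:P.
  by apply/polyP => j; rewrite coef_take_poly coefC; case: j.
have eh : hh.[q] = hh`_0 + (drop_poly 1 hh).[q] * q.
  by rewrite -[in LHS](poly_take_drop 1 hh) tk1 hornerD hornerC hornerM hornerXn expr1.
have c0 : hh`_0 = (g`_k)%:~R by rewrite coef_drop_poly add0n coef_map.
apply: (h (g`_k)); first by apply/eqP.
exists (- (drop_poly 1 hh).[q]); rewrite -c0.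
by apply/eqP; rewrite mulNr -subr_eq0 opprK -eh h0.
Qed.


Lemma caseB (R : idomainType) (T : comNzRingType) (f : {rmorphism R -> T}) (x r : R) :
  is_PID R -> injective f -> trans0 x -> r != 0 ->
  (forall g : {poly int}, (map_poly (intr : int -> R) g).[x] != 0 ->
     ~ dvdR r (map_poly (intr : int -> R) g).[x]) ->
  exists M : T -> Prop, maximal_subring M.
Proof.
move=> hPID hf tx r0 hr.
pose Ms (z : R) := exists g : {poly int}, z = (map_poly (intr : int -> R) g).[x] /\ z != 0.
have hI : is_ideal (dvdR r).
  split; [exact: dvd0 | by move=> a b ha hb; apply: dvdD | by move=> a b hb; apply: dvdR_mulr].
have dI : forall z, dvdR r z -> ~ Ms z.
  by move=> z hz [g [ez gz]]; rewrite ez in hz gz; exact: (hr g gz hz).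
have [J [hJ rJ dJ Jmax]] := ideal_zorn hI dI.
have M1 : Ms 1 by exists 1; rewrite rmorph1 hornerC oner_neq0.
have MM : forall a b, Ms a -> Ms b -> Ms (a * b).
  move=> _ _ [g1 [-> n1]] [g2 [-> n2]]; exists (g1 * g2).
  by rewrite rmorphM hornerM mulf_neq0.
have [nJ1 pJ] := max_prime M1 MM hJ dJ Jmax.
have [q hq] := hPID _ hJ.
have Jq : J q by apply/hq; exists 1; rewrite mul1r.
have q0 : q != 0.
  apply/eqP => q0; have : J r by apply: rJ; apply: dvdR_refl.
  by move/hq => [c]; rewrite q0 mulr0; apply/eqP.
have x0 : x != 0.
  apply/eqP => x0; have := tx 'X; rewrite map_polyX hornerX x0 => /(_ erefl 1%N).
  by rewrite coefX /= => /eqP; rewrite oner_eq0.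
have Mx : Ms x by exists 'X; rewrite map_polyX hornerX.
have Jdiv : forall z, dvdR q z -> J z by move=> z [c ->]; apply: iqM.
case: (pselect (exists w, f q * w = 1)) => [[w hw]|nu].
  apply: (caseA hf _ hw); apply: trans_of_nodiv => // n nz hd.
  apply: (dJ n%:~R); first by apply: Jdiv.
  by exists n%:P; rewrite map_polyC hornerC.
pose qT (z : T) := exists s, z = s * f q.
have hqT : is_ideal qT.
  split; first by exists 0; rewrite mul0r.
  - by move=> a b [s ->] [s' ->]; exists (s + s'); rewrite mulrDl.
  - by move=> a b [s ->]; exists (a * s); rewrite mulrA.
have dqT : forall z, qT z -> ~ (fun z => z = 1) z.
  by move=> z [s ->] e; apply: nu; exists s; rewrite mulrC.
have [N [hN qN dN Nmax]] := ideal_zorn hqT dqT.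
have [nN1 pN] := @max_prime T (fun z => z = 1) N erefl (fun a b ea eb => etrans (congr2 *%R ea eb) (mulr1 1)) hN dN Nmax.
have NJ : forall a, N (f a) -> J a.
  pose I' a := N (f a).
  have hI' : is_ideal I'.
    split; first by rewrite /I' rmorph0; apply: iq0.
    - by move=> a b ha hb; rewrite /I' rmorphD; apply: iqD.
    - by move=> a b hb; rewrite /I' rmorphM; apply: iqM.
  have [a0 ha0] := hPID _ hI'.
  have : I' q by apply: qN; exists 1; rewrite mul1r.
  move/ha0 => [c ec].
  have : J (c * a0) by rewrite -ec.
  case/pJ => [Jc|Ja0].
    exfalso; move/hq: Jc => [d ed].
    have e1 : 1 = d * a0.
      by apply: (@cancel_l _ q) => //; rewrite mulr1 [LHS]ec ed; ring.
    apply: nN1; rewrite -(rmorph1 f) e1; apply/ha0; exists d => //.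
  by move=> a /ha0 [e ->]; apply: iqM.
have [v hv] : exists v, N (f x * v - 1).
  pose N' z := exists n s, N n /\ z = n + s * f x.
  have hN' : is_ideal N'.
    split.
    - by exists 0, 0; split; [apply: iq0 | rewrite mul0r addr0].
    - move=> a b [n [s [Nn ->]]] [n' [s' [Nn' ->]]]; exists (n + n'), (s + s').
      by split; [apply: iqD | ring].
    - move=> a b [n [s [Nn ->]]]; exists (a * n), (a * s).
      by split; [apply: iqM | ring].
  case: (pselect (N' 1)) => [[n [s [Nn e]]]|nN'].
    exists s; have -> : f x * s - 1 = - n by rewrite e; ring.
    by apply: iqN.
  exfalso; apply: (dJ x) => //; apply: NJ.
  apply: (Nmax N' hN').
  - by move=> z Nz; exists z, 0; rewrite mul0r addr0.
  - by move=> z N'z e; apply: nN'; rewrite -e.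
  - by exists 0, 1; rewrite mul1r add0r; split=> //; apply: iq0.
apply: (@engine T N (f x) v hN nN1 pN hv).
move=> g; rewrite map_int_horner => /NJ hg i.
have e0 : (map_poly (intr : int -> R) g).[x] = 0.
  by apply: contrapT => /eqP ne; apply: (dJ _ hg); exists g.
by have := tx g e0 i => /(congr1 f); rewrite rmorph_int rmorph0 => ->; apply: iq0.
Qed.


Lemma count_contra (R : idomainType) (x : R) : is_PID R -> uncountable R ->
  (forall r, r != 0 -> exists g : {poly int},
     (map_poly (intr : int -> R) g).[x] != 0 /\ dvdR r (map_poly (intr : int -> R) g).[x]) ->
  (forall w : R, isU w -> algw w) -> False.
Proof.
move=> hPID hR H Hu.
pose Pf (a : R) (l : seq R) := (forall q, q \in l -> primeR q) /\ exists w, isU w /\ a = w * \prod_(q <- l) q.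
pose factl a := if pselect (exists l, Pf a l) is left h then sval (cid h) else [::].
have factlP a : a != 0 -> Pf a (factl a).
  move=> a0; rewrite /factl; case: pselect => [h|h]; first by case: (cid h).
  by exfalso; apply: h; apply: factor.
pose Pdat (r : R) (t : {poly int} * bitseq * R) :=
  [/\ (map_poly (intr : int -> R) t.1.1).[x] != 0, isU t.2 &
      r = t.2 * \prod_(q <- mask t.1.2 (factl (map_poly (intr : int -> R) t.1.1).[x])) q].
have exdat r : r != 0 -> exists t, Pdat r t.
  move=> r0; have [g [gx dg]] := H r r0.
  have [pl [w [uw ew]]] := factlP _ gx.
  rewrite ew in dg.
  have [m [w' [uw' e]]] := divisor_mask hPID pl uw dg.
  by exists (g, m, w').
pose dat r := if pselect (exists t, Pdat r t) is left h then sval (cid h) else (0, [::], 0).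
have datP r : r != 0 -> Pdat r (dat r).
  move=> r0; rewrite /dat; case: pselect => [h|h]; first by case: (cid h).
  by exfalso; apply: h; apply: exdat.
pose code r := if r == 0 then 0%N else (pickle ((dat r).1.1, (dat r).1.2, acode (dat r).2)).+1.
apply: hR; exists code => r1 r2.
rewrite /code; case: (eqVneq r1 0) => [->|n1]; case: (eqVneq r2 0) => [->|n2] //.
move=> [] /(pcan_inj pickleK) [e1 e2 e3].
have [_ u1 E1] := datP r1 n1; have [_ u2 E2] := datP r2 n2.
have ew : (dat r1).2 = (dat r2).2 by apply: acode_inj => //; apply: Hu.
by rewrite E1 E2 e1 e2 ew.
Qed.

Unset Implicit Arguments.
Theorem proposition2p27 (R : idomainType) (hPID : is_PID R) (hR : uncountable R)
  (T : comNzRingType) (f : {rmorphism R -> T}) (hf : injective f) :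
  exists S : T -> Prop, maximal_subring S.
Proof.
case: (pselect (exists r, trans0 r /\ exists w, f r * w = 1)) => [[r [tr [w hw]]]|nA].
  exact: caseA hf tr hw.
have [x tx] := exists_trans hR.
case: (pselect (exists r, r != 0 /\ forall g : {poly int},
    (map_poly (intr : int -> R) g).[x] != 0 -> ~ dvdR r (map_poly (intr : int -> R) g).[x]))
  => [[r [r0 hr]]|nB].
  exact: caseB hPID hf tx r0 hr.
exfalso; apply: (@count_contra R x hPID hR).
- move=> r r0; apply: contrapT => hh; apply: nB; exists r; split=> // g gx dg.
  by apply: hh; exists g.
- move=> w [w' hw]; apply: not_trans_alg => tw; apply: nA; exists w; split=> //.
  by exists (f w'); rewrite -rmorphM hw rmorph1.
Qed.
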